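(* Let $\mathcal{M}=\langle W^{\mathcal{M}},\sim^{\mathcal{M}},L^{\mathcal{M}}\rangle$ be a partial epistemic model and $\mathbf{A}=\langle T,\sim^{\mathbf{A}},\mathsf{pre}\rangle$ an action model, both having proper partial epistemic frames. Then the partial product update $\mathcal{M}[\![\mathbf{A}]\!]$ is a partial epistemic model (in particular its relations $\sim_a$ are well defined, independent of the representative $X$ chosen in a world $(\langle X\rangle_t,t)$). In particular, if both $\mathcal{M}$ and $\mathbf{A}$ are proper, so is $\mathcal{M}[\![\mathbf{A}]\!]$.
   Context: Fix agents $\mathsf{Ag}=\{0,\dots,n-1\}$, $n>1$, and a set of atomic propositions $\mathsf{At}=\bigcup_{a\in\mathsf{Ag}}\mathsf{At}_a$ (disjoint union). Epistemic formulas are generated by $\varphi::=p\mid\neg\varphi\mid\varphi\wedge\varphi\mid\varphi\vee\varphi\mid K_a\varphi$ ($p\in\mathsf{At}$, $a\in\mathsf{Ag}$). A partial epistemic frame $\langle W,\sim\rangle$ consists of a nonempty finite set $W$ and, for each $a\in\mathsf{Ag}$, a partial equivalence relation $\sim_a$ on $W$ (symmetric and transitive, not necessarily reflexive). A partial epistemic model $\langle W,\sim,L\rangle$ adds a labeling $L:W\to\mathcal{P}(\mathsf{At})$. For a world $w$, $\mathrm{Alive}(w)=\{a\in\mathsf{Ag}\mid w\sim_a w\}$; for $A\subseteq\mathsf{Ag}$, $w\sim_A w'$ means $w\sim_a w'$ for all $a\in A$. A frame/model is proper if for all $w\neq w'$ there is $a$ with $w\not\sim_a w'$. Satisfaction: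 $\mathcal{M},w\models p$ iff $p\in L(w)$; Boolean connectives as usual; $\mathcal{M},w\models K_a\varphi$ iff $\mathcal{M},w'\models\varphi$ for all $w'$ with $w\sim_a w'$. An action model $\langle T,\sim^{\mathbf{A}},\mathsf{pre}\rangle$ is a partial epistemic frame $\langle T,\sim^{\mathbf{A}}\rangle$ (elements called actions) together with a map $\mathsf{pre}$ assigning an epistemic formula to each action; $\mathrm{Alive}(t)=\{a\mid t\sim^{\mathbf{A}}_a t\}$. Partial product update: for $t\in T$ and $X\in W^{\mathcal{M}}$ let $\langle X\rangle_t=\{Y\in W^{\mathcal{M}}\mid X\sim^{\mathcal{M}}_{\mathrm{Alive}(t)}Y \text{ and } \mathcal{M},Y\models\mathsf{pre}(t)\}$. Then $\mathcal{M}[\![\mathbf{A}]\!]=\langle W,\sim,L\rangle$ where $W=\{(\langle X\rangle_t,t)\mid X\in W^{\mathcal{M}},t\in T,\mathrm{Alive}(t)\subseteq\mathrm{Alive}(X),\mathcal{M},X\models\mathsf{pre}(t)\}$, $(\langle X\rangle_t,t)\sim_a(\langle Y\rangle_s,s)$ iff $X\sim^{\mathcal{M}}_aY$ and $t\sim^{\mathbf{A}}_a s$, and $L((\langle X\rangle_t,t))=\bigcap_{X'\in\langle X\rangle_t}L^{\mathcal{M}}(X')$. *)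

(* Defs.v *)
From mathcomp Require Import all_boot.
Set Implicit Arguments. Unset Strict Implicit. Unset Printing Implicit Defensive.

(* Agents are 'I_n.  Atoms: a type At together with an owner map
   own : At -> 'I_n, realising At = disjoint union of the At_a. *)

Inductive formula (n : nat) (At : Type) : Type :=
| Atom of At
| Neg of formula n At
| And of formula n At & formula n At
| Or  of formula n At & formula n At
| Kn  of 'I_n & formula n At.

Arguments Atom {n At} _.
Arguments Neg {n At} _.
Arguments And {n At} _ _.
Arguments Or {n At} _ _.
Arguments Kn {n At} _ _.

Section Defs.
Variables (n : nat) (At : Type).

Definition is_pframe (W : finType) (R : 'I_n -> rel W) : Prop :=
  [/\ (exists w : W, True),
      (forall a, symmetric (R a)) &
      (forall a, transitive (R a))].

Definition proper_frame (W : finType) (R : 'I_n -> rel W) : Prop :=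
  forall w w' : W, w <> w' -> exists a, ~~ R a w w'.

Fixpoint sat (W : finType) (R : 'I_n -> rel W) (L : W -> pred At)
    (f : formula n At) (w : W) : bool :=
  match f with
  | Atom p => L w p
  | Neg g => ~~ sat R L g w
  | And g h => sat R L g w && sat R L h w
  | Or g h => sat R L g w || sat R L h w
  | Kn a g => [forall w', R a w w' ==> sat R L g w']
  end.

Definition alive (W : finType) (R : 'I_n -> rel W) (w : W) : {set 'I_n} :=
  [set a | R a w w].

Definition relA (W : finType) (R : 'I_n -> rel W) (A : {set 'I_n}) (x y : W) : bool :=
  [forall a in A, R a x y].

Section Update.
Variables (W : finType) (R : 'I_n -> rel W) (L : W -> pred At)
          (T : finType) (RA : 'I_n -> rel T) (pre : T -> formula n At).

Definition cls (X : W) (t : T) : {set W} :=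
  [set Y | relA R (alive RA t) X Y && sat R L (pre t) Y].

(* X is a representative of the candidate world w = (<X>_t, t) *)
Definition upd_rep (w : {set W} * T) (X : W) : Prop :=
  [/\ alive RA w.2 \subset alive R X, sat R L (pre w.2) X & w.1 = cls X w.2].

Definition upd_world (w : {set W} * T) : Prop := exists X, upd_rep w X.

Definition upd_rel (a : 'I_n) (w w' : {set W} * T) : Prop :=
  exists X Y, [/\ upd_rep w X, upd_rep w' Y, R a X Y & RA a w.2 w'.2].

Definition upd_label (w : {set W} * T) : pred At :=
  fun p => [forall X', (X' \in w.1) ==> L X' p].

End Update.
End Defs.

(* Main.v *)
Require Import Defs.
From mathcomp Require Import all_boot.
From Stdlib Require Import Classical.
Set Implicit Arguments.

Section Aux.
Variables (n : nat) (At : Type) (W : finType) (R : 'I_n -> rel W) (L : W -> pred At)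
    (T : finType) (RA : 'I_n -> rel T) (pre : T -> formula n At).
Hypothesis symR : forall a, symmetric (R a).
Hypothesis trR : forall a, transitive (R a).

Lemma rep_rel w X X' a : upd_rep R L RA pre w X -> upd_rep R L RA pre w X' ->
  a \in alive RA w.2 -> R a X' X.
Proof.
case=> sX pX eX [sX' pX' eX'] ha.
have : X \in w.1.
  rewrite eX /cls inE pX andbT; apply/forallP => b; apply/implyP => hb.
  by have := subsetP sX b hb; rewrite inE.
rewrite eX' /cls inE => /andP [/forallP H _].
by have := H a; rewrite ha.
Qed.

Lemma cls_eq X Y t : relA R (alive RA t) X Y -> cls R L RA pre X t = cls R L RA pre Y t.
Proof.
move=> /forallP H; apply/setP => Z; rewrite !inE; congr andb.
apply/forallP/forallP => H2 b; apply/implyP => hb;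
  have := H b; have := H2 b; rewrite hb /= => h1 h2.
- by apply: trR h1; rewrite symR.
- by apply: trR h1.
Qed.
End Aux.

Theorem proposition3p3 (n : nat) (hn : 1 < n) (At : Type) (own : At -> 'I_n)
    (W : finType) (R : 'I_n -> rel W) (L : W -> pred At)
    (T : finType) (RA : 'I_n -> rel T) (pre : T -> formula n At) :
  is_pframe R -> is_pframe RA -> proper_frame R -> proper_frame RA ->
  (* well-definedness: independence of the chosen representatives *)
  (forall a w w' X X' Y Y',
      upd_rep R L RA pre w X -> upd_rep R L RA pre w X' ->
      upd_rep R L RA pre w' Y -> upd_rep R L RA pre w' Y' ->
      RA a w.2 w'.2 -> (R a X Y <-> R a X' Y')) /\
  (* each ~_a on M[[A]] is a partial equivalence relation *)
  (forall a w w', upd_world R L RA pre w -> upd_world R L RA pre w' ->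
      upd_rel R L RA pre a w w' -> upd_rel R L RA pre a w' w) /\
  (forall a w w' w'', upd_world R L RA pre w -> upd_world R L RA pre w' ->
      upd_world R L RA pre w'' ->
      upd_rel R L RA pre a w w' -> upd_rel R L RA pre a w' w'' ->
      upd_rel R L RA pre a w w'') /\
  (* M[[A]] is proper *)
  (forall w w', upd_world R L RA pre w -> upd_world R L RA pre w' -> w <> w' ->
      exists a, ~ upd_rel R L RA pre a w w').
Proof.
move=> [_ symR trR] [_ symA trA] _ prA.
have alt : forall a (t s : T), RA a t s -> a \in alive RA t.
  by move=> a t s h; rewrite inE; apply: (trA a s t t h); rewrite symA.
have als : forall a (t s : T), RA a t s -> a \in alive RA s.
  by move=> a t s h; rewrite inE; apply: (trA a t s s); last exact: h; rewrite symA.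
have P1 : forall a w w' X X' Y Y',
      upd_rep R L RA pre w X -> upd_rep R L RA pre w X' ->
      upd_rep R L RA pre w' Y -> upd_rep R L RA pre w' Y' ->
      RA a w.2 w'.2 -> R a X Y -> R a X' Y'.
  move=> a w w' X X' Y Y' hX hX' hY hY' hA hXY.
  have h1 := rep_rel hX hX' (alt _ _ _ hA).
  have h2 := rep_rel hY' hY (als _ _ _ hA).
  exact: (trR _ _ _ _ (trR _ _ _ _ h1 hXY) h2).
split; [|split; [|split]].
- move=> a w w' X X' Y Y' hX hX' hY hY' hA; split; first exact: P1 hX hX' hY hY' hA.
  exact: P1 hX' hX hY' hY hA.
- move=> a w w' _ _ [X [Y [hX hY hr ha]]]; exists Y, X; split => //; [rewrite symR | rewrite symA] => //.
- move=> a w w' w'' _ _ _ [X [Y [hX hY hr ha]]] [Y2 [Z [hY2 hZ hr2 ha2]]].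
  exists X, Z; split => //; last exact: trA ha ha2.
  have := rep_rel hY2 hY (als _ _ _ ha) => h.
  exact: (trR _ _ _ _ hr (trR _ _ _ _ h hr2)).
- move=> [S t] [S' s] [X hX] [Y hY] hne.
  apply: NNPP => Hn; apply: hne.
  have Hall : forall a, upd_rel R L RA pre a (S, t) (S', s).
    move=> a; apply: NNPP => h; apply: Hn; by exists a.
  have ets : t = s.
    apply: NNPP => hts; have [a ha] := prA _ _ hts.
    have [X1 [Y1 [_ _ _ h]]] := Hall a; by rewrite h in ha.
  subst s.
  have rXY : relA R (alive RA t) X Y.
    apply/forallP => a; apply/implyP => ha.
    have [X1 [Y1 [hX1 hY1 hr _]]] := Hall a.
    have h1 := rep_rel hX1 hX ha. have h2 := rep_rel hY hY1 ha.
    exact: (trR _ _ _ _ (trR _ _ _ _ h1 hr) h2).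
  case: hX => _ _ /= ->; case: hY => _ _ /= ->.
  by rewrite (@cls_eq _ _ _ R L _ RA pre symR trR _ _ _ rXY).
Qed.
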